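(* Let $G$ and $H$ be graphs with at least two vertices each, with $V(G)\cap V(H)=\emptyset$, and let $K$ be a clique of $G$. Let $\{u_1,u_2\}$ be a top-two of $H$, and suppose there exists an acyclic digraph $D'$ with vertex set $V(G)\cup\{u_1,u_2\}$ such that $C(D')$ is $G$ together with $u_1,u_2$ as isolated vertices. If either $H$ has no edges or $H$ has no isolated vertices, then there exists an acyclic digraph $D$ such that (i) $C(D)=(G\ltimes_K H)\cup I_2$ if $H$ has no edges, and $C(D)=(G\ltimes_K H)\cup I_{k(H)}$ if $H$ has no isolated vertices; and (ii) $D$ has an acyclic ordering whose first $|V(G)|+2$ terms induce the digraph $D'$.
   Context: All graphs are finite and simple. For a digraph $D$, its competition graph $C(D)$ is the graph with vertex set $V(D)$ in which two distinct vertices $u,v$ are adjacent iff there is a vertex $x$ with arcs $(u,x),(v,x)\in A(D)$. The competition number $k(G)$ is the smallest nonnegative integer $k$ such that $G$ together with $k$ new isolated vertices is the competition graph of an acyclic digraph. $I_k$ is the edgeless graph on $k$ vertices; $X\cup I_k$ denotes the disjoint union of $X$ with $k$ new isolated vertices. An acyclic ordering of a digraph $D$ is an ordering of its vertices such that every arc goes from an earlier to a later vertex. A clique is a set of pairwise adjacent vertices (the empty set counts). For vertex-disjoint graphs $G,H$ and a clique $K$ of $G$, $G\ltimes_K H$ is the graph with vertex set $V(G)\cup V(H)$ and edge set $E(G)\cup E(H)\cup\{uv: u\in K, v\in V(H)\}$. For a graph $H$, a set $\{u,v\}$ of two distinct vertices is a top-two of $H$ if there exists an acyclic digraph $D$ with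 $C(D)=H\cup I_{k(H)}$ having an acyclic ordering whose first and second vertices are $u$ and $v$. *)

(* Defs.v *)
From HB Require Import structures.
From mathcomp Require Import all_boot all_order finmap.
Set Implicit Arguments. Unset Strict Implicit. Unset Printing Implicit Defensive.
Local Open Scope fset_scope.

(* A (finite simple) graph: a finite vertex set of labels and a raw edge
   relation; the graph it denotes has adjacency [adj] (symmetrised,
   loops removed, restricted to the vertex set). Every finite simple graph
   arises this way (up to relabelling). *)
Record graph := Graph { gV : {fset nat}; gE : rel nat }.

Definition adj (G : graph) (u v : nat) : bool :=
  [&& u \in gV G, v \in gV G, u != v & gE G u v || gE G v u].

Record digraph := Digraph { dV : {fset nat}; dA : rel nat }.

Definition arc (D : digraph) (u v : nat) : bool :=
  [&& u \in dV D, v \in dV D & dA D u v].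

(* acyclic = no directed cycle (loops are cycles of length 1) *)
Definition acyclic (D : digraph) : Prop :=
  forall (x : nat) (p : seq nat), path (arc D) x p -> last x p = x -> p = [::].

Definition cadj (D : digraph) (u v : nat) : Prop :=
  [/\ u \in dV D, v \in dV D, u != v & exists x, arc D u x && arc D v x].

Definition comp_is (D : digraph) (X : graph) (k : nat) : Prop :=
  exists Z : {fset nat},
    [/\ [disjoint gV X & Z], #|` Z| = k, dV D = gV X `|` Z &
        forall u v, cadj D u v <-> adj X u v].

Definition acyc_ord (D : digraph) (s : seq nat) : Prop :=
  [/\ uniq s, forall x, (x \in s) = (x \in dV D) &
      forall u v, arc D u v -> index u s < index v s].

Definition compable (X : graph) (k : nat) : Prop :=
  exists D, acyclic D /\ comp_is D X k.

Definition is_compnum (X : graph) (k : nat) : Prop :=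
  compable X k /\ forall k', compable X k' -> k <= k'.

Definition top_two (X : graph) (u v : nat) : Prop :=
  u != v /\ exists k, is_compnum X k /\
    exists D s, [/\ acyclic D, comp_is D X k, acyc_ord D s &
                    take 2 s = [:: u; v] \/ take 2 s = [:: v; u]].

Definition is_clique (G : graph) (K : {fset nat}) : Prop :=
  K `<=` gV G /\ forall u v, u \in K -> v \in K -> u != v -> adj G u v.

Definition semijoin (G : graph) (K : {fset nat}) (H : graph) : graph :=
  Graph (gV G `|` gV H)
    (fun a b => [|| adj G a b, adj H a b,
                   (a \in K) && (b \in gV H) | (b \in K) && (a \in gV H)]).

Definition edgeless (X : graph) : Prop := forall u v, ~~ adj X u v.
Definition no_isolated (X : graph) : Prop :=
  forall u, u \in gV X -> exists v, adj X u v.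

Definition prefix_induces (D : digraph) (s : seq nat) (n : nat) (D' : digraph) : Prop :=
  (forall x, (x \in take n s) = (x \in dV D')) /\
  (forall a b, a \in take n s -> b \in take n s -> arc D a b = arc D' a b).

(* Main.v *)
Require Import Defs.
From mathcomp Require Import all_boot all_order finmap zify.
Set Implicit Arguments. Unset Strict Implicit. Unset Printing Implicit Defensive.
Local Open Scope fset_scope.


Lemma ord_acyclic D s : acyc_ord D s -> acyclic D.
Proof.
case=> _ _ Hf x p.
suff: forall y q, path (Defs.arc D) y q -> q != [::] -> index y s < index (last y q) s.
  move=> H Hp Hl; apply/eqP; apply/negPn/negP=> Hq.
  by have := H _ _ Hp Hq; rewrite Hl ltnn.
move=> y q; elim: q y => // z q IH y /= /andP[Hyz Hp] _.
have := Hf _ _ Hyz; case: q IH Hp => [|w q] IH Hp //= h.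
by apply: ltn_trans h (IH _ Hp _).
Qed.

Lemma topo D : acyclic D -> exists s, acyc_ord D s.
Proof.
move=> Hac.
set m := \max_(x <- enum_fset (dV D)) x.
have Hm : forall x, x \in dV D -> x < m.+1.
  by move=> x Hx; rewrite ltnS; apply: (leq_bigmax_seq (F := fun x => x) x).
pose e : rel 'I_m.+1 := fun i j => Defs.arc D i j.
pose rk (x : nat) := #|[set i : 'I_m.+1 | connect e i (inord x)]|.
have Hrk : forall u v, Defs.arc D u v -> rk u < rk v.
  move=> u v Huv.
  have /andP[Hu /andP[Hv _]] := Huv.
  have Eu : val (inord u : 'I_m.+1) = u by exact: inordK (Hm _ Hu).
  have Ev : val (inord v : 'I_m.+1) = v by exact: inordK (Hm _ Hv).
  have He : e (inord u) (inord v) by rewrite /e Eu Ev.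
  apply: proper_card; apply/properP; split.
    apply/subsetP=> i; rewrite !inE => Hi.
    by apply: connect_trans Hi (connect1 He).
  exists (inord v); first by rewrite inE connect0.
  rewrite inE; apply/negP=> /connectP[p Hp Hl].
  have Hp' : path e (inord v) (rcons p (inord v)).
    by rewrite rcons_path Hp -Hl He.
  have := Hac (val (inord v : 'I_m.+1)) (map val (rcons p (inord v))).
  rewrite path_map.
  by move=> /(_ Hp'); rewrite last_map last_rcons => /(_ erefl); case: p {Hp Hl Hp'}.
pose leT := fun x y => rk x <= rk y.
exists (sort leT (enum_fset (dV D))); split.
- by rewrite sort_uniq; apply: fset_uniq.
- by move=> x; rewrite mem_sort.
- move=> u v Huv.
  have /andP[Hu /andP[Hv _]] := Huv.
  have Hlt := Hrk _ _ Huv.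
  have Hs : sorted leT (sort leT (enum_fset (dV D))).
    by apply: sort_sorted => x y; apply: leq_total.
  have Hu' : u \in sort leT (enum_fset (dV D)) by rewrite mem_sort.
  have Hv' : v \in sort leT (enum_fset (dV D)) by rewrite mem_sort.
  rewrite ltnNge leq_eqVlt; apply/negP=> /orP[/eqP Hi|Hi].
    have : u = v by rewrite -(nth_index 0 Hu') -Hi nth_index.
    by move=> E; move: Hlt; rewrite E ltnn.
  have Htr : transitive leT by move=> x y z; apply: leq_trans.
  have := sorted_ltn_index Htr Hs v u Hv' Hu' Hi.
  by rewrite /leT leqNgt Hlt.
Qed.

Definition extD (D' : digraph) (t : seq nat) (N : rel nat) : digraph :=
  Digraph (dV D' `|` [fset x in t])
    (fun a b => (dA D' a b && (a \in dV D') && (b \in dV D')) || N a b).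

Lemma extV D' t N x : (x \in dV (extD D' t N)) = (x \in dV D') || (x \in t).
Proof. by rewrite /= in_fsetU; congr orb; rewrite inE. Qed.

Lemma ext_props D' (s' t : seq nat) (N : rel nat) :
  acyc_ord D' s' -> uniq t -> (forall x, x \in t -> x \notin dV D') ->
  (forall a b, N a b -> [&& a \in s' ++ t, b \in t & index a (s'++t) < index b (s'++t)]) ->
  [/\ acyc_ord (extD D' t N) (s' ++ t),
      prefix_induces (extD D' t N) (s' ++ t) (size s') D'
    & forall a b, Defs.arc (extD D' t N) a b = Defs.arc D' a b || N a b].
Proof.
move=> [Hu Hm Hf] Ht Hdis HN.
have Harc : forall a b, Defs.arc (extD D' t N) a b = Defs.arc D' a b || N a b.
  move=> a b; rewrite /Defs.arc !extV /=.
  case Nab: (N a b).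
    have /and3P[Ha Hb _] := HN _ _ Nab.
    by rewrite mem_cat Hm in Ha; rewrite Hb Ha !orbT.
  by rewrite !orbF; case: (a \in dV D'); case: (b \in dV D'); rewrite ?andbF ?andbT.
split => //.
- split.
  + rewrite cat_uniq Hu Ht andbT /=; apply/hasPn => x /Hdis; by rewrite Hm.
  + by move=> x; rewrite extV mem_cat Hm.
  + move=> a b; rewrite Harc => /orP[Hab|Nab]; last by case/and3P: (HN _ _ Nab).
    have := Hf _ _ Hab; have /and3P[Ha Hb _] := Hab.
    by rewrite !index_cat !Hm Ha Hb.
- split.
  + by move=> x; rewrite take_size_cat // Hm.
  + move=> a b; rewrite take_size_cat // => Ha Hb; rewrite Harc.
    case Nab: (N a b); rewrite ?orbF //.
    have /and3P[_ Hb' _] := HN _ _ Nab.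
    by move: (Hdis _ Hb'); rewrite -Hm Hb.
Qed.

Lemma ext_cadj D' (s' t : seq nat) (N : rel nat) G X :
  acyc_ord D' s' -> uniq t -> (forall x, x \in t -> x \notin dV D') ->
  (forall a b, N a b -> [&& a \in s' ++ t, b \in t & index a (s'++t) < index b (s'++t)]) ->
  (forall u v, cadj D' u v <-> adj G u v) ->
  (forall u v, adj G u v -> adj X u v) ->
  (forall u v x, N u x -> N v x -> u != v -> adj X u v) ->
  (forall u v, adj X u v -> adj G u v \/ exists x, N u x && N v x) ->
  forall u v, cadj (extD D' t N) u v <-> adj X u v.
Proof.
move=> Ho Ht Hdis HN HcG HGX HNX HXc.
have [_ _ Harc] := ext_props Ho Ht Hdis HN.
have Hm : forall a, a \in s' ++ t -> a \in dV (extD D' t N).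
  by case: Ho => _ Hm _ a; rewrite mem_cat extV Hm.
move=> u v; split.
- case=> Hu Hv Hne [x]; rewrite !Harc => /andP[/orP[A1|N1] /orP[A2|N2]].
  + apply: HGX; apply/HcG; split => //.
    * by case/and3P: A1.
    * by case/and3P: A2.
    * by exists x; rewrite A1 A2.
  + have /and3P[_ Hx _] := HN _ _ N2.
    by case/and3P: A1 => _ Hx' _; move: (Hdis _ Hx); rewrite Hx'.
  + have /and3P[_ Hx _] := HN _ _ N1.
    by case/and3P: A2 => _ Hx' _; move: (Hdis _ Hx); rewrite Hx'.
  + exact: HNX N1 N2 Hne.
- move=> Huv; have Hne : u != v by case/and4P: Huv.
  case: (HXc _ _ Huv) => [/HcG [Hu Hv _ [x Hx]] | [x /andP[N1 N2]]].
  + split => //; try by rewrite extV ?Hu ?Hv.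
    by exists x; rewrite !Harc; case/andP: Hx => -> ->.
  + split => //.
    * by apply: Hm; case/and3P: (HN _ _ N1).
    * by apply: Hm; case/and3P: (HN _ _ N2).
    * by exists x; rewrite !Harc N1 N2 !orbT.
Qed.

Lemma adj_sym X u v : adj X u v = adj X v u.
Proof. by rewrite /adj eq_sym orbC; case: (u \in gV X); case: (v \in gV X). Qed.

Lemma adjV X u v : adj X u v -> (u \in gV X) && (v \in gV X).
Proof. by case/and4P=> -> ->. Qed.

Lemma adjG_SJ G K H u v : adj G u v -> adj (semijoin G K H) u v.
Proof.
move=> Huv; have := Huv; case/and4P=> Hu Hv Hne _.
by rewrite /adj /= !in_fsetU Hu Hv Hne Huv.
Qed.

Lemma adjH_SJ G K H u v : adj H u v -> adj (semijoin G K H) u v.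
Proof.
move=> Huv; have := Huv; case/and4P=> Hu Hv Hne _.
by rewrite /adj /= !in_fsetU Hu Hv Hne Huv !orbT.
Qed.

Lemma cross_SJ G K H u v : K `<=` gV G -> u \in K -> v \in gV H -> u != v ->
  adj (semijoin G K H) u v.
Proof.
move=> /fsubsetP HK Hu Hv Huv.
rewrite /adj /= !in_fsetU (HK _ Hu) /=; apply/and3P; split => //.
  by apply/orP; right.
by apply/orP; left; apply/orP; right; apply/orP; right; apply/orP; left; apply/andP.
Qed.

Lemma SJ_cases G K H (P : nat -> nat -> Prop) :
  (forall u v, P u v -> P v u) -> (forall u v, adj G u v -> P u v) ->
  (forall u v, adj H u v -> P u v) ->
  (forall u v, u \in K -> v \in gV H -> u != v -> P u v) ->
  forall u v, adj (semijoin G K H) u v -> P u v.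
Proof.
move=> Hs HG HH HK u v /and4P[_ _ Huv /orP[]] /= /or4P[].
- exact: HG.
- exact: HH.
- by case/andP=> ??; apply: HK.
- by case/andP=> ??; apply: Hs; apply: HK; rewrite // eq_sym.
- by move=> ?; apply: Hs; apply: HG.
- by move=> ?; apply: Hs; apply: HH.
- by case/andP=> ??; apply: Hs; apply: HK; rewrite // eq_sym.
- by case/andP=> ??; apply: HK.
Qed.

Lemma idx_pre (s' t : seq nat) x : x \in s' -> index x (s'++t) < size s'.
Proof. by move=> Hx; rewrite index_cat Hx index_mem. Qed.

Lemma idx_post (s' t : seq nat) x : x \notin s' -> index x (s'++t) = (size s' + index x t)%N.
Proof. by move=> Hx; rewrite index_cat (negbTE Hx). Qed.

Lemma bound_fset (A : {fset nat}) : exists M, forall x, x \in A -> x < M.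
Proof.
exists (\max_(x <- enum_fset A) x).+1 => x Hx.
by rewrite ltnS; apply: (leq_bigmax_seq (F := fun x => x) x).
Qed.
Lemma case_edgeless G H K D' (s' : seq nat) a b :
  is_clique G K -> [disjoint gV G & gV H] -> a != b -> a \in gV H -> b \in gV H ->
  acyc_ord D' s' -> (forall x, (x \in dV D') = [|| x \in gV G, x == a | x == b]) ->
  (forall u v, cadj D' u v <-> adj G u v) -> edgeless H ->
  exists (t : seq nat) (N : rel nat),
    [/\ acyc_ord (extD D' t N) (s' ++ t),
        prefix_induces (extD D' t N) (s' ++ t) (size s') D'
      & comp_is (extD D' t N) (semijoin G K H) 2].
Proof.
move=> [HKG HKc] Hdis Hab Ha Hb Ho HV' Hc' Hedge.
have [M HM] := bound_fset (gV G `|` gV H).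
have HMG : forall x, x \in gV G -> x < M by move=> x Hx; apply: HM; rewrite in_fsetU Hx.
have HMH : forall x, x \in gV H -> x < M by move=> x Hx; apply: HM; rewrite in_fsetU Hx orbT.
have HGH : forall x, x \in gV G -> x \notin gV H by apply/fdisjointP.
set rest := [seq x <- enum_fset (gV H) | (x != a) && (x != b)].
set t := rest ++ [:: M; M.+1].
set hs := [:: a, b & rest].
have Hsz : size hs = size t by rewrite /t size_cat /= addn2.
have Hrest : forall x, (x \in rest) = [&& x \in gV H, x != a & x != b].
  by move=> x; rewrite mem_filter andbC.
have Hmt : forall x, (x \in t) = [|| x \in rest, x == M | x == M.+1].
  by move=> x; rewrite mem_cat !inE.
have Hut : uniq t.
  rewrite cat_uniq filter_uniq ?fset_uniq //= inE andbT.
  rewrite (ltn_eqF (ltnSn M)) andbT orbF !Hrest.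
  apply/norP; split; apply/negP => /and3P[/HMH].
    by rewrite ltnn.
  by rewrite ltnNge leqnSn.
have Hdt : forall x, x \in t -> x \notin dV D'.
  move=> x; rewrite Hmt HV' Hrest => /or3P[/and3P[Hx Hxa Hxb]| /eqP -> | /eqP ->].
  - rewrite (negbTE Hxa) (negbTE Hxb) !orbF; apply/negP => /HGH; by rewrite Hx.
  - apply/negP => /or3P[/HMG|/eqP E|/eqP E]; first by rewrite ltnn.
    + by move: (HMH _ Ha); rewrite -E ltnn.
    + by move: (HMH _ Hb); rewrite -E ltnn.
  - apply/negP => /or3P[/HMG|/eqP E|/eqP E]; first by rewrite ltnNge leqnSn.
    + by move: (HMH _ Ha); rewrite -E ltnNge leqnSn.
    + by move: (HMH _ Hb); rewrite -E ltnNge leqnSn.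
have Hs'm : forall x, (x \in s') = (x \in dV D') by case: Ho.
have Hzip : forall x y, (x, y) \in zip hs t ->
    exists2 i, i < size t & x = nth 0 hs i /\ y = nth 0 t i.
  move=> x y /(nthP (0,0)) [i]; rewrite size_zip -Hsz minnn Hsz => Hi.
  rewrite nth_zip // => [[<- <-]]; by exists i.
have Hzip' : forall i, i < size t -> (nth 0 hs i, nth 0 t i) \in zip hs t.
  move=> i Hi; rewrite -nth_zip //; apply: mem_nth; by rewrite size_zip Hsz minnn.
have Hhs : forall v, v \in hs -> v \in gV H.
  by move=> v; rewrite !inE Hrest => /or3P[/eqP ->|/eqP ->|/and3P[]].
pose N := fun x y : nat => ((x \in K) && (y \in t)) || ((x, y) \in zip hs t).
have HN : forall x y, N x y ->
    [&& x \in s' ++ t, y \in t & index x (s'++t) < index y (s'++t)].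
  move=> x y /orP[/andP[Hx Hy]|/Hzip[i Hi [-> ->]]].
  - have Hx' : x \in s' by rewrite Hs'm HV' (fsubsetP HKG).
    rewrite mem_cat Hx' Hy /=.
    rewrite (@idx_post s' t y) ?Hs'm ?Hdt //.
    exact: (leq_trans (idx_pre t Hx') (leq_addr _ _)).
  - have Hy : nth 0 t i \in t by rewrite mem_nth.
    rewrite Hy /=.
    rewrite (@idx_post s' t (nth 0 t i)) ?Hs'm ?Hdt // index_uniq //.
    case: i Hi {Hy} => [|[|j]] Hi /=.
    + have Hx' : a \in s' by rewrite Hs'm HV' eqxx !orbT.
      rewrite mem_cat Hx' /=; exact: leq_trans (idx_pre _ Hx') (leq_addr _ _).
    + have Hx' : b \in s' by rewrite Hs'm HV' eqxx !orbT.
      rewrite mem_cat Hx' /=; exact: leq_trans (idx_pre _ Hx') (leq_addr _ _).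
    + have Hj : j < size rest by move: Hi; rewrite size_cat /= addn2.
      have Ej : nth 0 rest j = nth 0 t j by rewrite /t nth_cat Hj.
      have Hjt : j < size t by rewrite /t size_cat; apply: ltn_addr.
      rewrite Ej mem_cat mem_nth // orbT /=.
      by rewrite idx_post ?Hs'm ?Hdt ?mem_nth // index_uniq // ltn_add2l ltnS leqW.
have [Hord Hpre Harc] := ext_props Ho Hut Hdt HN.
exists t, N; split => //.
exists [fset M; M.+1]; split.
- apply/fdisjointP => x /HM Hx; rewrite !inE; apply/negP => /orP[] /eqP E; move: Hx; rewrite E.
    by rewrite ltnn.
  by rewrite ltnNge leqnSn.
- by rewrite cardfs2 (ltn_eqF (ltnSn M)).
- apply/fsetP => x; rewrite extV HV' Hmt Hrest /= !inE.
  case Exa: (x == a); first by rewrite (eqP Exa) Ha !orbT.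
  case Exb: (x == b); first by rewrite (eqP Exb) Hb !orbT.
  by case: (x \in gV G); case: (x \in gV H); rewrite /= ?orbF ?andbT.
- apply: (ext_cadj (G:=G) Ho Hut Hdt HN Hc').
  + exact: adjG_SJ.
  + move=> u v x /orP[/andP[Hu _]|/Hzip[i Hi [-> Ex]]] /orP[/andP[Hv _]|/Hzip[j Hj [-> Ey]]] Hne.
    * by apply: adjG_SJ; apply: HKc.
    * by apply: cross_SJ => //; apply: Hhs; rewrite mem_nth // Hsz.
    * rewrite adj_sym; apply: cross_SJ; rewrite // 1?eq_sym //.
      by apply: Hhs; rewrite mem_nth // Hsz.
    * have Eij : i = j.
        by rewrite -(@index_uniq _ 0 i t) // -(@index_uniq _ 0 j t) // -Ex -Ey.
      by move: Hne; rewrite Eij eqxx.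
  + apply: (SJ_cases (P := fun u v => adj G u v \/ exists x, N u x && N v x)).
    * move=> u v [HG|[x /andP[N1 N2]]]; first by left; rewrite adj_sym.
      by right; exists x; rewrite N1 N2.
    * by move=> u v HG; left.
    * by move=> u v; move: (Hedge u v) => /negP.
    * move=> u v Hu Hv Hne; right.
      have Hvh : v \in hs.
        rewrite /hs !inE Hrest Hv /=.
        by case: (v == a); case: (v == b).
      exists (nth 0 t (index v hs)); apply/andP; split.
      - by apply/orP; left; rewrite Hu mem_nth // -Hsz index_mem.
      - apply/orP; right; rewrite -{1}(nth_index 0 Hvh); apply: Hzip'.
        by rewrite -Hsz index_mem.
Qed.
Lemma case_noiso G H K D' DH (s' r : seq nat) a b kH :
  is_clique G K -> [disjoint gV G & gV H] -> a != b ->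
  a \notin gV G -> b \notin gV G ->
  acyc_ord D' s' -> (forall x, (x \in dV D') = [|| x \in gV G, x == a | x == b]) ->
  (forall u v, cadj D' u v <-> adj G u v) -> no_isolated H ->
  comp_is DH H kH -> acyc_ord DH [:: a, b & r] ->
  exists (t : seq nat) (N : rel nat),
    [/\ acyc_ord (extD D' t N) (s' ++ t),
        prefix_induces (extD D' t N) (s' ++ t) (size s') D'
      & comp_is (extD D' t N) (semijoin G K H) kH].
Proof.
move=> [HKG HKc] Hdis Hab HaG HbG Ho HV' Hc' Hnoi [ZH [HdZ HkZ HVH HcH]] [HuH HmH HfH].
have HGH : forall x, x \in gV G -> x \notin gV H by apply/fdisjointP.
have HHZ : forall x, x \in gV H -> x \notin ZH by apply/fdisjointP.
have Hsm : forall x, (x \in [:: a, b & r]) = (x \in gV H) || (x \in ZH).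
  by move=> x; rewrite HmH HVH in_fsetU.
have Ha : a \in dV DH by rewrite -HmH inE eqxx.
have Hb : b \in dV DH by rewrite -HmH !inE eqxx orbT.
move: (HuH) => /= /andP[]; rewrite inE negb_or => /andP[Hab' Har] /andP[Hbr Hur].
have [M HM] := bound_fset (gV G `|` dV DH).
have HMG : forall x, x \in gV G -> x < M by move=> x Hx; apply: HM; rewrite in_fsetU Hx.
have HMD : forall x, x \in dV DH -> x < M by move=> x Hx; apply: HM; rewrite in_fsetU Hx orbT.
have HMH : forall x, x \in gV H -> x < M by move=> x Hx; apply: HMD; rewrite HVH in_fsetU Hx.
pose P x := [|| x \in gV H, x == a | x == b].
pose f x := if P x then x else (x + M)%N.
pose g y := if P y then y else (y - M)%N.
have HPM : forall x, P (x + M)%N = false.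
  move=> x; rewrite /P; apply/negbTE; rewrite !negb_or; apply/and3P; split.
  - by apply/negP => /HMH; rewrite ltnNge leq_addl.
  - by apply/negP => /eqP E; move: (HMD _ Ha); rewrite -E ltnNge leq_addl.
  - by apply/negP => /eqP E; move: (HMD _ Hb); rewrite -E ltnNge leq_addl.
have fK : cancel f g.
  by move=> x; rewrite /f /g; case Px: (P x); rewrite ?Px // HPM addnK.
have finj : injective f := can_inj fK.
have HfP : forall x, P x -> f x = x by move=> x Px; rewrite /f Px.
have Hrab : forall z, z \in r -> (z != a) && (z != b).
  by move=> z Hz; apply/andP; split; apply/negP => /eqP E; [move: Har|move: Hbr]; rewrite -E Hz.
have Hir : forall z, z \in r -> index z [:: a, b & r] = (index z r).+2.
  move=> z /Hrab /andP[Hza Hzb] /=; by rewrite eq_sym (negbTE Hza) eq_sym (negbTE Hzb).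
set t := map f r.
have Hut : uniq t by rewrite map_inj_uniq.
have Hdt : forall x, x \in t -> x \notin dV D'.
  move=> x /mapP[z Hz ->]; have /andP[Hza Hzb] := Hrab _ Hz.
  rewrite HV'; case Pz: (P z).
  - rewrite HfP // (negbTE Hza) (negbTE Hzb) !orbF.
    have Hz' : z \in gV H by move: Pz; rewrite /P (negbTE Hza) (negbTE Hzb) !orbF.
    by apply/negP => /HGH; rewrite Hz'.
  - rewrite /f Pz; apply/negP => /or3P[/HMG|/eqP E|/eqP E].
    + by rewrite ltnNge leq_addl.
    + by move: (HMD _ Ha); rewrite -E ltnNge leq_addl.
    + by move: (HMD _ Hb); rewrite -E ltnNge leq_addl.
have Hs'm : forall x, (x \in s') = (x \in dV D') by case: Ho.
have Hpre : forall x, x \in dV D' -> forall y, y \in t -> index x (s' ++ t) < index y (s' ++ t).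
  move=> x Hx y Hy; rewrite -Hs'm in Hx.
  rewrite (@idx_post s' t y) ?Hs'm ?Hdt //.
  exact: (leq_trans (idx_pre t Hx) (leq_addr _ _)).
pose N := fun x y : nat => (y \in t) && ((x \in K) || ((x \in gV H) && Defs.arc DH x (g y))).
have HN : forall x y, N x y ->
    [&& x \in s' ++ t, y \in t & index x (s'++t) < index y (s'++t)].
  move=> x y /andP[Hy Hxy]; rewrite Hy /=.
  case/orP: Hxy => [Hx|/andP[HxH Harc]].
  - have Hx' : x \in dV D' by rewrite HV' (fsubsetP HKG).
    by rewrite mem_cat Hs'm Hx' /= Hpre.
  - case Exab: ((x == a) || (x == b)).
      have Hx' : x \in dV D' by rewrite HV' Exab orbT.
      by rewrite mem_cat Hs'm Hx' /= Hpre.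
    have Hxr : x \in r.
      have : x \in [:: a, b & r] by rewrite Hsm HxH.
      by rewrite !inE orbA Exab.
    have Hxt : x \in t by rewrite -(HfP x) ?map_f // /P HxH.
    rewrite mem_cat Hxt orbT /=.
    case/mapP: Hy => z Hz Ey.
    have := HfH _ _ Harc; rewrite Ey fK !Hir // ltnS ltnS => Hi.
    rewrite (@idx_post s' t (f z)) ?Hs'm ?Hdt ?map_f // (@idx_post s' t x) ?Hs'm ?Hdt //.
    by rewrite ltn_add2l -{1}(HfP x) /t ?index_map // /P HxH.
have Hprey : forall u v y, u != v -> Defs.arc DH u y -> Defs.arc DH v y -> y \in r.
  move=> u v y Hne Hu Hv.
  have /and3P[Hu' Hy _] := Hu; have /and3P[Hv' _ _] := Hv.
  have Iu := HfH _ _ Hu; have Iv := HfH _ _ Hv.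
  rewrite -HmH in Hy Hu' Hv'.
  have Ea : index a [:: a, b & r] = 0 by rewrite /= eqxx.
  have Eb : index b [:: a, b & r] = 1 by rewrite /= (negbTE Hab) eqxx.
  move: Hy Iu Iv; rewrite inE => /orP[/eqP ->|]; first by rewrite Ea.
  rewrite inE => /orP[/eqP ->|//].
  rewrite Eb !ltnS !leqn0 => /eqP Iu /eqP Iv.
  have Eua : forall w, index w [:: a, b & r] = 0 -> w = a by move=> w /=; case: eqP.
  by move: Hne; rewrite (Eua _ Iu) (Eua _ Iv) eqxx.
have [Hord Hpre' Harc] := ext_props Ho Hut Hdt HN.
exists t, N; split => //.
exists [fset x in map f (enum_fset ZH)]; split.
- apply/fdisjointP => x Hx; rewrite inE; apply/negP => /mapP[z Hz Ex].
  have HzH : z \notin gV H by apply/negP => /HHZ; rewrite Hz.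
  case Pz: (P z).
  + have Hzab : (z == a) || (z == b) by move: Pz; rewrite /P (negbTE HzH).
    move: Hx; rewrite Ex HfP //= in_fsetU (negbTE HzH) orbF.
    by case/orP: Hzab => /eqP ->; apply/negP.
  + have HzD : z \in dV DH by rewrite HVH in_fsetU Hz orbT.
    move: Hx; rewrite Ex /f Pz /= in_fsetU => /orP[/HMG|/HMH]; by rewrite ltnNge leq_addl.
- by rewrite card_fseq undup_id ?size_map // map_inj_uniq // fset_uniq.
- apply/fsetP => x; rewrite extV HV' /= !in_fsetU inE.
  have HPa : P a by rewrite /P eqxx orbT.
  have HPb : P b by rewrite /P eqxx !orbT.
  apply/idP/idP.
  + move=> /orP[/or3P[HxG|/eqP->|/eqP->]|/mapP[z Hz ->]].
    * by rewrite HxG.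
    * have : a \in [:: a, b & r] by rewrite inE eqxx.
      rewrite Hsm => /orP[->|HaZ]; first by rewrite orbT.
      by apply/orP; right; apply/mapP; exists a => //; rewrite HfP.
    * have : b \in [:: a, b & r] by rewrite !inE eqxx orbT.
      rewrite Hsm => /orP[->|HbZ]; first by rewrite orbT.
      by apply/orP; right; apply/mapP; exists b => //; rewrite HfP.
    * have : z \in [:: a, b & r] by rewrite !inE Hz !orbT.
      rewrite Hsm => /orP[HzH|HzZ].
        by rewrite HfP ?HzH ?orbT // /P HzH.
      by apply/orP; right; apply: map_f.
  + move=> /orP[/orP[HxG|HxH]|/mapP[z Hz ->]].
    * by rewrite HxG.
    * have : x \in [:: a, b & r] by rewrite Hsm HxH.
      rewrite !inE => /or3P[->|->|Hxr]; rewrite ?orbT //.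
      by apply/orP; right; rewrite -(HfP x) ?map_f // /P HxH.
    * have : z \in [:: a, b & r] by rewrite Hsm Hz orbT.
      rewrite !inE => /or3P[/eqP->|/eqP->|Hzr].
      - by rewrite HfP // eqxx !orbT.
      - by rewrite HfP // eqxx !orbT.
      - by apply/orP; right; apply: map_f.
- have HNmk : forall u y, y \in r -> u \in gV H -> Defs.arc DH u y -> N u (f y).
    by move=> u y Hy Hu Hy'; rewrite /N map_f //= fK Hu Hy' !orbT.
  have HNK : forall u y, y \in r -> u \in K -> N u (f y).
    by move=> u y Hy Hu; rewrite /N map_f //= Hu.
  apply: (ext_cadj (G:=G) Ho Hut Hdt HN Hc').
  + exact: adjG_SJ.
  + move=> u v x /andP[Hx /orP[Hu|/andP[Hu Au]]] /andP[_ /orP[Hv|/andP[Hv Av]]] Hne.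
    * by apply: adjG_SJ; apply: HKc.
    * by apply: cross_SJ.
    * by rewrite adj_sym; apply: cross_SJ; rewrite // eq_sym.
    * apply: adjH_SJ; apply/HcH; split => //.
      - by case/and3P: Au.
      - by case/and3P: Av.
      - by exists (g x); rewrite Au Av.
  + apply: (SJ_cases (P := fun u v => adj G u v \/ exists x, N u x && N v x)).
    * move=> u v [HG|[x /andP[N1 N2]]]; first by left; rewrite adj_sym.
      by right; exists x; rewrite N1 N2.
    * by move=> u v HG; left.
    * move=> u v Huv; right.
      have /andP[Hu Hv] := adjV Huv.
      have [_ _ Hne [y /andP[A1 A2]]] := proj2 (HcH u v) Huv.
      have Hy := Hprey _ _ _ Hne A1 A2.
      by exists (f y); rewrite HNmk ?HNmk.
    * move=> u v Hu Hv Hne; right.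
      have [w Hvw] := Hnoi _ Hv.
      have [_ _ Hne' [y /andP[A1 A2]]] := proj2 (HcH v w) Hvw.
      have Hy := Hprey _ _ _ Hne' A1 A2.
      by exists (f y); rewrite HNK ?HNmk.
Qed.
Lemma notin_card (A : {fset nat}) (u1 u2 : nat) :
  #|` A `|` [fset u1; u2]| = (#|` A| + 2)%N -> (u1 \notin A) && (u2 \notin A).
Proof.
have E : A `|` [fset u1; u2] = u1 |` (u2 |` A).
  apply/fsetP => x; rewrite !inE.
  by case: (x \in A); case: (x == u1); case: (x == u2).
rewrite E !cardfsU1 => H.
have [h1 h2] : (u1 \notin u2 |` A) /\ (u2 \notin A).
  by move: H; case: (u1 \notin _); case: (u2 \notin A) => /= H; split => //; lia.
by move: h1; rewrite inE negb_or => /andP[_ ->]; rewrite h2.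
Qed.

Lemma size_ord D s : acyc_ord D s -> size s = #|` dV D|.
Proof. by case=> Hu Hm _; apply: perm_size; apply: uniq_perm => //; apply: fset_uniq. Qed.

Lemma comp_card D X k : comp_is D X k -> #|` dV D| = (#|` gV X| + k)%N.
Proof.
case=> Z [Hd Hk HV _]; rewrite HV cardfsU (disjoint_fsetI0 Hd) cardfs0 subn0 Hk //.
Qed.

Unset Implicit Arguments.

Theorem proposition2p5 (G H : graph) (K : {fset nat}) (u1 u2 : nat) (D' : digraph) :
  2 <= #|` gV G| -> 2 <= #|` gV H| -> [disjoint gV G & gV H] ->
  is_clique G K ->
  top_two H u1 u2 ->
  acyclic D' -> dV D' = gV G `|` [fset u1; u2] -> comp_is D' G 2 ->
  edgeless H \/ no_isolated H ->
  exists (D : digraph) (s : seq nat),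
    [/\ acyclic D,
        edgeless H -> comp_is D (semijoin G K H) 2,
        no_isolated H -> forall k, is_compnum H k -> comp_is D (semijoin G K H) k,
        acyc_ord D s &
        prefix_induces D s (#|` gV G| + 2) D'].
Proof.
move=> HG2 HH2 Hdis HK [Hne12 [k0 [Hk0 [DH [sH [HacH HcH HoH Htake]]]]]] Hac' HV'0 Hcomp' Hcase.
have [s' Ho'] := topo Hac'.
have Hsize : size s' = (#|` gV G| + 2)%N by rewrite (size_ord Ho') (comp_card Hcomp').
have /andP[Hu1G Hu2G] : (u1 \notin gV G) && (u2 \notin gV G).
  by apply: notin_card; rewrite -HV'0 (comp_card Hcomp').
have Hc' : forall u v, cadj D' u v <-> adj G u v by case: Hcomp' => Z [].
have [a [b [r Es]]] : exists a b r, sH = [:: a, b & r].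
  by case: Htake; case: (sH) => [|a [|b r]] //= _; exists a, b, r.
subst sH.
have Hab' : (a = u1 /\ b = u2) \/ (a = u2 /\ b = u1).
  by case: Htake => /= [[-> ->]|[-> ->]]; [left|right].
have Hab : a != b by case: Hab' => [[Ea Eb]|[Ea Eb]]; rewrite Ea Eb // eq_sym.
have HaG : a \notin gV G by case: Hab' => [[Ea Eb]|[Ea Eb]]; rewrite Ea.
have HbG : b \notin gV G by case: Hab' => [[Ea Eb]|[Ea Eb]]; rewrite Eb.
have HV' : forall x, (x \in dV D') = [|| x \in gV G, x == a | x == b].
  move=> x; rewrite HV'0 in_fsetU in_fset2.
  by case: Hab' => [[Ea Eb]|[Ea Eb]]; rewrite Ea Eb //; case: (x == u1); case: (x == u2); rewrite ?orbT.
have HHne : exists h, h \in gV H.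
  move: HH2; case E: (enum_fset (gV H)) => [|h l] //= _.
  by exists h; rewrite -[h \in gV H]/(h \in enum_fset (gV H)) E mem_head.
case: Hcase => [Hedge|Hnoi].
- have Hk00 : k0 = 0.
    apply/eqP; rewrite -leqn0; apply: (proj2 Hk0).
    exists (Digraph (gV H) (fun _ _ => false)); split.
      by move=> x [|y p] //=; rewrite /Defs.arc /= !andbF.
    exists fset0; split.
    + by apply/fdisjointP => x _; rewrite in_fset0.
    + by rewrite cardfs0.
    + by rewrite fsetU0.
    + move=> u v; split.
        by case=> _ _ _ [x]; rewrite /Defs.arc /= !andbF.
      by move=> Huv; move: (Hedge u v); rewrite Huv.
  case: HcH => ZH [_ HkZ HVH _].
  have HZ0 : ZH = fset0 by apply: cardfs0_eq; rewrite HkZ Hk00.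
  have HmH : forall x, x \in [:: a, b & r] -> x \in gV H.
    by move=> x; case: HoH => _ -> _; rewrite HVH HZ0 fsetU0.
  have Hb' : b \in [:: a, b & r] by rewrite !inE eqxx orbT.
  have [t [N [Hord Hpre Hcmp]]] := case_edgeless HK Hdis Hab (HmH _ (mem_head _ _))
    (HmH b Hb') Ho' HV' Hc' Hedge.
  exists (extD D' t N), (s' ++ t); split => //.
  + exact: ord_acyclic Hord.
  + move=> Hnoi; have [h Hh] := HHne; have [w Hw] := Hnoi _ Hh.
    by move: (Hedge h w); rewrite Hw.
  + by rewrite -Hsize.
- have [t [N [Hord Hpre Hcmp]]] := case_noiso HK Hdis Hab HaG HbG Ho' HV' Hc' Hnoi HcH HoH.
  exists (extD D' t N), (s' ++ t); split => //.
  + exact: ord_acyclic Hord.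
  + move=> Hedge; have [h Hh] := HHne; have [w Hw] := Hnoi _ Hh.
    by move: (Hedge h w); rewrite Hw.
  + move=> _ k Hk; have -> : k = k0.
      by apply/eqP; rewrite eqn_leq (proj2 Hk _ (proj1 Hk0)) (proj2 Hk0 _ (proj1 Hk)).
    exact: Hcmp.
  + by rewrite -Hsize.
Qed.
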